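(* Let $\nu>0$ with $\nu\neq 2$, let $\beta$ be a constant, $K$ a smooth positive function, $C(u)=\beta K(u)$, and $J(u)=\int K(u)\,du$ an antiderivative of $K$. Then the equation $C(u)u_t=z^{-\nu}\left(K(u)z^{\nu}u_z\right)_z$ ($z>0$) admits the Lie point symmetry generators $$\widetilde Y_1=tz\partial_z+t^2\partial_t-\left(\frac{\beta}{4}z^2+\frac{1+\nu}{2}t\right)\frac{J(u)}{K(u)}\partial_u,\quad \widetilde Y_2=\frac{z}{2}\partial_z+t\partial_t,\quad \widetilde Y_3=\partial_t,\quad \widetilde Y_4=-\frac{J(u)}{K(u)}\partial_u .$$
   Context: Here $u=u(z,t)$. A vector field $Y=\xi\partial_z+\tau\partial_t+\eta\partial_u$ (coefficients depending on $z,t,u$) is an admitted Lie point symmetry generator of the equation if its second prolongation annihilates $C(u)u_t-K'(u)u_z^2-K(u)u_{zz}-\frac{\nu}{z}K(u)u_z$ on the solution manifold of the equation (equivalently, the one-parameter local group it generates maps solutions to solutions). *)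

(* Defs.v *)
From Stdlib Require Import Reals.
From Coquelicot Require Import Coquelicot.
Open Scope R_scope.

(** Points of the second-order jet space J^2 over (z,t) with dependent
    variable u: coordinates (z, t, u, u_z, u_t, u_zz, u_zt, u_tt). *)
Record jet2 := mkJet2 {
  jz : R; jt : R; ju : R; juz : R; jut : R; juzz : R; juzt : R; jutt : R }.

Definition jfun := jet2 -> R.

Definition set_z (p : jet2) x := mkJet2 x (jt p) (ju p) (juz p) (jut p) (juzz p) (juzt p) (jutt p).
Definition set_t (p : jet2) x := mkJet2 (jz p) x (ju p) (juz p) (jut p) (juzz p) (juzt p) (jutt p).
Definition set_u (p : jet2) x := mkJet2 (jz p) (jt p) x (juz p) (jut p) (juzz p) (juzt p) (jutt p).
Definition set_uz (p : jet2) x := mkJet2 (jz p) (jt p) (ju p) x (jut p) (juzz p) (juzt p) (jutt p).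
Definition set_ut (p : jet2) x := mkJet2 (jz p) (jt p) (ju p) (juz p) x (juzz p) (juzt p) (jutt p).
Definition set_uzz (p : jet2) x := mkJet2 (jz p) (jt p) (ju p) (juz p) (jut p) x (juzt p) (jutt p).
Definition set_uzt (p : jet2) x := mkJet2 (jz p) (jt p) (ju p) (juz p) (jut p) (juzz p) x (jutt p).
Definition set_utt (p : jet2) x := mkJet2 (jz p) (jt p) (ju p) (juz p) (jut p) (juzz p) (juzt p) x.

Definition d_z   (F : jfun) : jfun := fun p => Derive (fun x => F (set_z p x)) (jz p).
Definition d_t   (F : jfun) : jfun := fun p => Derive (fun x => F (set_t p x)) (jt p).
Definition d_u   (F : jfun) : jfun := fun p => Derive (fun x => F (set_u p x)) (ju p).
Definition d_uz  (F : jfun) : jfun := fun p => Derive (fun x => F (set_uz p x)) (juz p).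
Definition d_ut  (F : jfun) : jfun := fun p => Derive (fun x => F (set_ut p x)) (jut p).
Definition d_uzz (F : jfun) : jfun := fun p => Derive (fun x => F (set_uzz p x)) (juzz p).
Definition d_uzt (F : jfun) : jfun := fun p => Derive (fun x => F (set_uzt p x)) (juzt p).
Definition d_utt (F : jfun) : jfun := fun p => Derive (fun x => F (set_utt p x)) (jutt p).

(** Total derivatives D_z, D_t, applied to functions of order <= 1
    (i.e. depending on z, t, u, u_z, u_t only). *)
Definition Dz (F : jfun) : jfun := fun p =>
  d_z F p + juz p * d_u F p + juzz p * d_uz F p + juzt p * d_ut F p.
Definition Dt (F : jfun) : jfun := fun p =>
  d_t F p + jut p * d_u F p + juzt p * d_uz F p + jutt p * d_ut F p.

Record vfield := mkVF {
  vxi : R -> R -> R -> R; vtau : R -> R -> R -> R; veta : R -> R -> R -> R }.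

Definition lift (f : R -> R -> R -> R) : jfun := fun p => f (jz p) (jt p) (ju p).

Section Prolongation.
Variable Y : vfield.
Let xi := lift (vxi Y).
Let tau := lift (vtau Y).
Let eta := lift (veta Y).

Definition eta_z : jfun := fun p => Dz eta p - juz p * Dz xi p - jut p * Dz tau p.
Definition eta_t : jfun := fun p => Dt eta p - juz p * Dt xi p - jut p * Dt tau p.
Definition eta_zz : jfun := fun p => Dz eta_z p - juzz p * Dz xi p - juzt p * Dz tau p.
Definition eta_zt : jfun := fun p => Dt eta_z p - juzz p * Dt xi p - juzt p * Dt tau p.
Definition eta_tt : jfun := fun p => Dt eta_t p - juzt p * Dt xi p - jutt p * Dt tau p.

Definition pr2 (F : jfun) : jfun := fun p =>
  xi p * d_z F p + tau p * d_t F p + eta p * d_u F p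
  + eta_z p * d_uz F p + eta_t p * d_ut F p
  + eta_zz p * d_uzz F p + eta_zt p * d_uzt F p + eta_tt p * d_utt F p.
End Prolongation.

Definition Delta (nu : R) (C K : R -> R) : jfun := fun p =>
  C (ju p) * jut p - Derive K (ju p) * (juz p)^2 - K (ju p) * juzz p
  - nu / jz p * K (ju p) * juz p.

Definition admitted_symmetry (nu : R) (C K : R -> R) (Y : vfield) : Prop :=
  forall p : jet2, 0 < jz p -> Delta nu C K p = 0 -> pr2 Y (Delta nu C K) p = 0.

Definition smooth (f : R -> R) : Prop := forall n x, ex_derive_n f n x.

(* Main.v *)
Require Import Defs.
From Stdlib Require Import Reals Lra FunctionalExtensionality.
From Coquelicot Require Import Coquelicot.
Open Scope R_scope.

Ltac side K K1 K2 J HK HK1 HJ Kn := repeat match goal with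
  | |- _ /\ _ => split
  | |- True => exact I
  | |- ex_derive (fun y => ?F y) ?x =>
      first [ constr_eq F K; exists (K1 x); exact (HK x)
            | constr_eq F K1; exists (K2 x); exact (HK1 x)
            | constr_eq F J; exists (K x); exact (HJ x) ]
  | |- _ * _ <> 0 => apply Rmult_integral_contrapositive_currified
  | |- _ <> 0 => first [apply Kn | lra]
  end.
Ltac rwD K K1 K2 J HK HK1 HJ Kn DK' DK1' DJ' := match goal with |- context [Derive ?f ?x] =>
  let H := fresh in
  eassert (H : is_derive f x _) by (auto_derive; [side K K1 K2 J HK HK1 HJ Kn | rewrite ?DK', ?DK1', ?DJ'; reflexivity]);
  rewrite (is_derive_unique f x _ H); clear H end.
Lemma gen (nu beta b0 b1 b2 c0 : R) (K K1 K2 J : R -> R)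
 (HK : forall x, is_derive K x (K1 x)) (HK1 : forall x, is_derive K1 x (K2 x))
 (HJ : forall x, is_derive J x (K x)) (Kpos : forall x, 0 < K x) :
 admitted_symmetry nu (fun u => beta * K u) K
   (mkVF (fun z t u => (b1/2 + b2*t)*z) (fun z t u => b0 + b1*t + b2*t^2)
         (fun z t u => (c0 - beta*b2/4*z^2 - (1+nu)/2*b2*t) * (J u / K u))).
Proof. (idtac).
intros p Hz HD.
assert (Kn : forall x, K x <> 0) by (intro x; specialize (Kpos x); lra).
assert (DK : forall x, Derive K x = K1 x) by (intro; apply is_derive_unique; apply HK).
assert (DK' : forall x, Derive (fun y => K y) x = K1 x) by (intro; apply is_derive_unique; apply HK).
assert (DK1' : forall x, Derive (fun y => K1 y) x = K2 x) by (intro; apply is_derive_unique; apply HK1).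
assert (DJ' : forall x, Derive (fun y => J y) x = K x) by (intro; apply is_derive_unique; apply HJ).
set (A := fun z t => c0 - beta*b2/4*z^2 - (1+nu)/2*b2*t).
assert (EZ : eta_z (mkVF (fun z t u => (b1/2 + b2*t)*z) (fun z t u => b0 + b1*t + b2*t^2)
         (fun z t u => (c0 - beta*b2/4*z^2 - (1+nu)/2*b2*t) * (J u / K u))) = fun q =>
  let z := jz q in let t := jt q in let u := ju q in
  -beta*b2/2*z*(J u/K u) + juz q*(A z t)*((K u*K u - J u*K1 u)/(K u*K u)) - juz q*(b1/2+b2*t)).
{ apply functional_extensionality; intro q.
  unfold eta_z, Dz, d_z, d_u, d_uz, d_ut, lift, set_z, set_u, set_uz, set_ut, A.
  cbn [vxi vtau veta jz jt ju juz jut juzz juzt jutt].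
  repeat rwD K K1 K2 J HK HK1 HJ Kn DK' DK1' DJ'. field. apply Kn. }
assert (ET : eta_t (mkVF (fun z t u => (b1/2 + b2*t)*z) (fun z t u => b0 + b1*t + b2*t^2)
         (fun z t u => (c0 - beta*b2/4*z^2 - (1+nu)/2*b2*t) * (J u / K u))) = fun q =>
  let z := jz q in let t := jt q in let u := ju q in
  -(1+nu)/2*b2*(J u/K u) + jut q*(A z t)*((K u*K u - J u*K1 u)/(K u*K u)) - juz q*(b2*z) - jut q*(b1+2*b2*t)).
{ apply functional_extensionality; intro q.
  unfold eta_t, Dt, d_t, d_u, d_uz, d_ut, lift, set_t, set_u, set_uz, set_ut, A.
  cbn [vxi vtau veta jz jt ju juz jut juzz juzt jutt].
  repeat rwD K K1 K2 J HK HK1 HJ Kn DK' DK1' DJ'. field. apply Kn. }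
assert (DE : Defs.Delta nu (fun u => beta * K u) K = fun q =>
  beta * K (ju q) * jut q - K1 (ju q) * (juz q)^2 - K (ju q) * juzz q
  - nu / jz q * K (ju q) * juz q).
{ apply functional_extensionality; intro q. unfold Defs.Delta. rewrite DK. reflexivity. }
revert HD. rewrite DE. intro HD.
unfold pr2, eta_zz, eta_zt, eta_tt. rewrite EZ, ET.
unfold Dz, Dt, d_z, d_t, d_u, d_uz, d_ut, d_uzz, d_uzt, d_utt, lift, set_z, set_t, set_u, set_uz, set_ut, set_uzz, set_uzt, set_utt, A.
cbn [vxi vtau veta jz jt ju juz jut juzz juzt jutt].
repeat rwD K K1 K2 J HK HK1 HJ Kn DK' DK1' DJ'.
destruct p as [z t u uz ut uzz uzt utt]. cbn [jz jt ju juz jut juzz juzt jutt] in *.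
assert (Huzz : uzz = (beta * K u * ut - K1 u * uz^2 - nu / z * K u * uz) / K u).
{ assert (H2 : uzz * K u = beta * K u * ut - K1 u * uz^2 - nu / z * K u * uz) by lra.
  rewrite <- H2. field. apply Kn. }
subst uzz.
field. split; [apply Kn | lra].
Qed.

Lemma vf_eq (a a' b b' c c' : R -> R -> R -> R) :
  (forall z t u, a z t u = a' z t u) -> (forall z t u, b z t u = b' z t u) ->
  (forall z t u, c z t u = c' z t u) -> mkVF a b c = mkVF a' b' c'.
Proof.
intros Ha Hb Hc. f_equal; apply functional_extensionality; intro z;
apply functional_extensionality; intro t; apply functional_extensionality; intro u; auto.
Qed.

Lemma sym_ext nu C K (a a' b b' c c' : R -> R -> R -> R) :
  admitted_symmetry nu C K (mkVF a' b' c') ->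
  (forall z t u, a z t u = a' z t u) -> (forall z t u, b z t u = b' z t u) ->
  (forall z t u, c z t u = c' z t u) -> admitted_symmetry nu C K (mkVF a b c).
Proof. intros H Ha Hb Hc. rewrite (vf_eq a a' b b' c c'); auto. Qed.

Theorem mainTheorem4 (nu beta : R) (K C J : R -> R) :
  0 < nu -> nu <> 2 ->
  smooth K -> (forall u, 0 < K u) ->
  (forall u, C u = beta * K u) ->
  (forall u, is_derive J u (K u)) ->
  admitted_symmetry nu C K
    (mkVF (fun z t u => t * z) (fun z t u => t ^ 2)
          (fun z t u => - (beta / 4 * z ^ 2 + (1 + nu) / 2 * t) * (J u / K u)))
  /\ admitted_symmetry nu C K
    (mkVF (fun z t u => z / 2) (fun z t u => t) (fun z t u => 0))
  /\ admitted_symmetry nu C K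
    (mkVF (fun z t u => 0) (fun z t u => 1) (fun z t u => 0))
  /\ admitted_symmetry nu C K
    (mkVF (fun z t u => 0) (fun z t u => 0) (fun z t u => - (J u / K u))).
Proof.
intros Hnu Hnu2 Hs Kpos HC HJ.
assert (EC : C = fun u => beta * K u) by (apply functional_extensionality; exact HC).
subst C.
assert (HK : forall x, is_derive K x (Derive K x)).
{ intro x. apply Derive_correct. exact (Hs 1%nat x). }
assert (HK1 : forall x, is_derive (Derive K) x (Derive (Derive K) x)).
{ intro x. apply Derive_correct. exact (Hs 2%nat x). }
split; [|split; [|split]].
- eapply sym_ext; [ apply (gen nu beta 0 0 1 0 K (Derive K) (Derive (Derive K)) J HK HK1 HJ Kpos)
  | intros; cbv beta; field; apply Rgt_not_eq, Kpos | intros; cbv beta; field; apply Rgt_not_eq, Kpos | intros; cbv beta; field; apply Rgt_not_eq, Kpos ].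
- eapply sym_ext; [ apply (gen nu beta 0 1 0 0 K (Derive K) (Derive (Derive K)) J HK HK1 HJ Kpos)
  | intros; cbv beta; field; apply Rgt_not_eq, Kpos | intros; cbv beta; field; apply Rgt_not_eq, Kpos | intros; cbv beta; field; apply Rgt_not_eq, Kpos ].
- eapply sym_ext; [ apply (gen nu beta 1 0 0 0 K (Derive K) (Derive (Derive K)) J HK HK1 HJ Kpos)
  | intros; cbv beta; field; apply Rgt_not_eq, Kpos | intros; cbv beta; field; apply Rgt_not_eq, Kpos | intros; cbv beta; field; apply Rgt_not_eq, Kpos ].
- eapply sym_ext; [ apply (gen nu beta 0 0 0 (-1) K (Derive K) (Derive (Derive K)) J HK HK1 HJ Kpos)
  | intros; cbv beta; field; apply Rgt_not_eq, Kpos | intros; cbv beta; field; apply Rgt_not_eq, Kpos | intros; cbv beta; field; apply Rgt_not_eq, Kpos ].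
Qed.
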